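(* Let $m,n\ge 2$ be integers with $(m,n)\ne(2,2)$, let $K_{m,n}$ be the complete bipartite graph with parts of sizes $m$ and $n$, and let $I_{K_{m,n}}$ be its toric ideal over a field $K$. Then $\mathrm{Split}(I_{K_{m,n}})=\mathrm{Split}_{\mathrm{rad}}(I_{K_{m,n}})=3$.
   Context: $K_{m,n}$ has vertex set $\{x_1,\ldots,x_m\}\cup\{y_1,\ldots,y_n\}$ and edges $b_{ij}=\{x_i,y_j\}$ for all $i,j$. For a graph $G$ with vertices $v_1,\ldots,v_N$ and edges $e_1,\ldots,e_M$, the toric ideal $I_G\subset K[e_1,\ldots,e_M]$ is the kernel of $e_k\mapsto t_it_j$ where $e_k=\{v_i,v_j\}$, i.e. the toric ideal of the configuration $\{{\bf a}_e\}$ with ${\bf a}_e\in\{0,1\}^N$ the indicator vector of the two endpoints of $e$. For a toric ideal $I_A$ (of a configuration $A$ of integer vectors with $\ker_{\mathbb{Z}}(A)\cap\mathbb{N}^M=\{{\bf 0}\}$) in $K[x_1,\ldots,x_M]$: $\mathrm{Split}(I_A)$ is the smallest integer $s$ such that there exist toric ideals $I_{A_1},\ldots,I_{A_s}$ in the same polynomial ring with $I_A=I_{A_1}+\cdots+I_{A_s}$ and $I_{A_i}\ne I_A$ for all $i$; $\mathrm{Split}_{\mathrm{rad}}(I_A)$ is the smallest integer $r$ such that there exist toric ideals $I_{A_1},\ldots,I_{A_r}$ with $I_A=\mathrm{rad}(I_{A_1}+\cdots+I_{A_r})$ and $I_{A_i}\ne I_A$ for all $i$. *)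

(* Defs.v *)
From HB Require Import structures.
From mathcomp Require Import all_boot all_order all_algebra.
From mathcomp Require Import mpoly.
Set Implicit Arguments. Unset Strict Implicit. Unset Printing Implicit Defensive.
Import GRing.Theory.
Local Open Scope ring_scope.

(* A configuration of M integer vectors in Z^d: column k is (A k). *)
Definition config (M d : nat) := 'I_M -> 'I_d -> int.

Definition config_mul (M d : nat) (A : config M d) (u : 'I_M -> nat) (r : 'I_d) : int :=
  \sum_(k < M) A k r * (u k)%:Z.

Definition pointed_config (M d : nat) (A : config M d) : Prop :=
  forall u : 'I_M -> nat, (forall r, config_mul A u r = 0) -> forall k, u k = 0%N.

(* Toric ideal I_A in K[x_1..x_M]: the kernel of x_k |-> t^{a_k}.
   Since x^u |-> t^{A u}, f is in the kernel iff for every b in Z^d the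
   coefficients of f on the monomials u with A u = b sum to zero. *)
Definition toric_ideal (K : fieldType) (M d : nat) (A : config M d)
  (f : {mpoly K[M]}) : Prop :=
  forall b : 'I_d -> int,
    \sum_(u <- msupp f | [forall r, config_mul A (fun k => u k) r == b r]) f@_u = 0.

Definition same_set (T : Type) (P Q : T -> Prop) : Prop := forall x, P x <-> Q x.

Definition is_toric (K : fieldType) (M : nat) (I : {mpoly K[M]} -> Prop) : Prop :=
  exists d (A : config M d), pointed_config A /\ same_set I (toric_ideal A).

Definition ideal_sum (K : fieldType) (M s : nat) (J : 'I_s -> {mpoly K[M]} -> Prop)
  (f : {mpoly K[M]}) : Prop :=
  exists g : 'I_s -> {mpoly K[M]}, (forall i, J i (g i)) /\ f = \sum_(i < s) g i.

Definition rad (K : fieldType) (M : nat) (I : {mpoly K[M]} -> Prop)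
  (f : {mpoly K[M]}) : Prop := exists k : nat, I (f ^+ k).

Definition splits_into (K : fieldType) (M : nat) (I : {mpoly K[M]} -> Prop) (s : nat) : Prop :=
  exists J : 'I_s -> {mpoly K[M]} -> Prop,
    (forall i, is_toric (J i)) /\ (forall i, ~ same_set (J i) I) /\
    same_set I (ideal_sum J).

Definition rad_splits_into (K : fieldType) (M : nat) (I : {mpoly K[M]} -> Prop) (s : nat) : Prop :=
  exists J : 'I_s -> {mpoly K[M]} -> Prop,
    (forall i, is_toric (J i)) /\ (forall i, ~ same_set (J i) I) /\
    same_set I (rad (ideal_sum J)).

Definition Split_eq (K : fieldType) (M : nat) (I : {mpoly K[M]} -> Prop) (s : nat) : Prop :=
  splits_into I s /\ forall s', splits_into I s' -> (s <= s')%N.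

Definition Split_rad_eq (K : fieldType) (M : nat) (I : {mpoly K[M]} -> Prop) (s : nat) : Prop :=
  rad_splits_into I s /\ forall s', rad_splits_into I s' -> (s <= s')%N.

Definition graph_config (N M : nat) (ends : 'I_M -> nat * nat) : config M N :=
  fun k v => ((nat_of_ord v == (ends k).1) + (nat_of_ord v == (ends k).2))%:Z.

(* K_{m,n}: vertices x_1..x_m are 0..m-1, y_1..y_n are m..m+n-1;
   edge b_ij (0-based i<m, j<n) is variable number i*n + j. *)
Definition Kmn_ends (m n : nat) (k : 'I_(m * n)) : nat * nat :=
  ((k %/ n)%N, (m + k %% n)%N).

Definition Kmn_config (m n : nat) : config (m * n) (m + n) :=
  @graph_config (m + n)%N (m * n)%N (@Kmn_ends m n).

Definition toric_ideal_Kmn (K : fieldType) (m n : nat) : {mpoly K[m * n]} -> Prop :=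
  toric_ideal (@Kmn_config m n).

(* Main.v *)
Require Import Defs.
From HB Require Import structures.
From mathcomp Require Import all_boot all_order all_algebra.
From mathcomp Require Import mpoly.
From mathcomp Require Import zify.
From Stdlib Require Import Classical.
Set Implicit Arguments. Unset Strict Implicit. Unset Printing Implicit Defensive.
Import GRing.Theory.
Local Open Scope ring_scope.


Section Gen.
Variable K : fieldType.
Variables M d : nat.
Variable A : config M d.

Definition cm (u : 'X_{1..M}) r := config_mul A (fun k => u k) r.
Definition sameA (u v : 'X_{1..M}) := forall r, cm u r = cm v r.

Lemma fs_sub (f : {mpoly K[M]}) (P : pred 'X_{1..M}) s :
  uniq s -> {subset msupp f <= s} ->
  \sum_(u <- msupp f | P u) f@_u = \sum_(u <- s | P u) f@_u.
Proof.
move=> us sub.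
have hp : perm_eq ([seq x <- s | mem (msupp f) x] ++ [seq x <- s | predC (mem (msupp f)) x]) s.
  by rewrite perm_filterC.
rewrite -(perm_big _ hp) big_cat /=.
rewrite [X in _ + X]big1_seq ?addr0; last first.
  by move=> x /andP[_]; rewrite mem_filter => /andP[/= /memN_msupp_eq0].
apply: perm_big; apply: uniq_perm; rewrite ?msupp_uniq ?filter_uniq //.
by move=> x; rewrite mem_filter /=; case: (boolP (x \in msupp f)) => // /sub ->.
Qed.

Lemma toric0 : toric_ideal A (0 : {mpoly K[M]}).
Proof. by move=> b; rewrite msupp0 big_nil. Qed.

Lemma toricD (f g : {mpoly K[M]}) :
  toric_ideal A f -> toric_ideal A g -> toric_ideal A (f + g).
Proof.
move=> hf hg b; set s := undup (msupp f ++ msupp g).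
have us : uniq s by apply: undup_uniq.
rewrite (@fs_sub _ _ s) //; last first.
  by move=> x /msuppD_le; rewrite mem_undup.
under eq_bigr do rewrite mcoeffD.
rewrite big_split /= -!(@fs_sub _ _ s) ?hf ?hg ?addr0 // => x xs;
  by rewrite mem_undup mem_cat xs ?orbT.
Qed.

Lemma toricZ c (f : {mpoly K[M]}) : toric_ideal A f -> toric_ideal A (c *: f).
Proof.
move=> hf b; rewrite (@fs_sub _ _ (msupp f)) ?msupp_uniq //; last exact: msuppZ_le.
under eq_bigr do rewrite mcoeffZ.
by rewrite -mulr_sumr hf mulr0.
Qed.

Lemma toricN (f : {mpoly K[M]}) : toric_ideal A f -> toric_ideal A (- f).
Proof. by move=> h; rewrite -scaleN1r; apply: toricZ. Qed.

Lemma toricB (f g : {mpoly K[M]}) :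
  toric_ideal A f -> toric_ideal A g -> toric_ideal A (f - g).
Proof. by move=> hf hg; apply: toricD => //; apply: toricN. Qed.

Lemma toric_sum I (r : seq I) (F : I -> {mpoly K[M]}) :
  (forall i, toric_ideal A (F i)) -> toric_ideal A (\sum_(i <- r) F i).
Proof.
move=> h; elim: r => [|x r ih]; first by rewrite big_nil; apply: toric0.
by rewrite big_cons; apply: toricD.
Qed.

Lemma bin_fiber (u v : 'X_{1..M}) (P : pred 'X_{1..M}) : u != v ->
  \sum_(w <- msupp ('X_[u] - 'X_[v] : {mpoly K[M]}) | P w) ('X_[u] - 'X_[v] : {mpoly K[M]})@_w
  = (P u)%:R - (P v)%:R.
Proof.
move=> nuv; rewrite (@fs_sub _ _ [:: u; v]); last first.
- by move=> x /msuppB_le; rewrite mem_cat !msuppX !inE => /orP[] ->; rewrite ?orbT.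
- by rewrite /= inE nuv.
rewrite !big_cons big_nil !mcoeffB !mcoeffX eqxx (negbTE nuv) eq_sym (negbTE nuv).
by rewrite eqxx; case: (P u); case: (P v); rewrite /= ?subr0 ?sub0r ?addr0 ?add0r.
Qed.

Lemma toric_binP (u v : 'X_{1..M}) :
  toric_ideal A ('X_[u] - 'X_[v] : {mpoly K[M]}) <-> sameA u v.
Proof.
have [->|nuv] := eqVneq u v.
  by rewrite subrr; split=> // _; apply: toric0.
split.
- move=> h r; move: (h (cm u)); rewrite bin_fiber //.
  have -> : [forall r0, config_mul A (fun k => u k) r0 == cm u r0] by apply/forallP.
  case: (boolP [forall r, _ == _]) => [/forallP /(_ r) /eqP h' |_].
    by symmetry; exact: h'.
  by move/eqP; rewrite subr0 oner_eq0.
- move=> h b; rewrite bin_fiber //.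
  have -> : [forall r, config_mul A (fun k => u k) r == b r] =
            [forall r, config_mul A (fun k => v k) r == b r].
    by apply: eq_forallb => r; rewrite -/(cm u r) h.
  by rewrite subrr.
Qed.

Lemma cmD u v r : cm (u + v)%MM r = cm u r + cm v r.
Proof.
rewrite /cm /config_mul -big_split; apply: eq_bigr => k _.
by rewrite mnmDE PoszD mulrDr.
Qed.

Lemma cmMn u t r : cm (u *+ t)%MM r = cm u r *+ t.
Proof.
rewrite /cm /config_mul -sumrMnl; apply: eq_bigr => k _.
by rewrite mulmnE PoszM mulrA -mulr_natr natz.
Qed.

Lemma cmU a r : cm U_(a)%MM r = A a r.
Proof.
rewrite /cm /config_mul (bigD1 a) //= big1 ?addr0 => [|k ka].
  by rewrite mnm1E eqxx mulr1.
by rewrite mnm1E eq_sym (negbTE ka) mulr0.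
Qed.

Lemma sameA_refl u : sameA u u. Proof. by []. Qed.
Lemma sameA_sym u v : sameA u v -> sameA v u. Proof. by move=> h r; rewrite h. Qed.
Lemma sameA_trans u v w : sameA u v -> sameA v w -> sameA u w.
Proof. by move=> h1 h2 r; rewrite h1 h2. Qed.
Lemma sameA_add w u v : sameA u v -> sameA (w + u)%MM (w + v)%MM.
Proof. by move=> h r; rewrite !cmD h. Qed.

Lemma toric_ind (P : {mpoly K[M]} -> Prop) :
  P 0 -> (forall f g, P f -> P g -> P (f + g)) ->
  (forall c u v, sameA u v -> P (c *: ('X_[u] - 'X_[v]))) ->
  forall f, toric_ideal A f -> P f.
Proof.
move=> P0 PD Pb.
suff H : forall n f, (size (msupp f) <= n)%N -> toric_ideal A f -> P f.
  by move=> f; apply: (H _ f (leqnn _)).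
elim=> [|n ih] f.
  by rewrite leqn0 size_eq0 => /eqP /msuppnil0 -> _.
move=> hs hf; have [->//|fn0] := eqVneq f 0.
set w := mlead f.
have wf : w \in msupp f by apply: mlead_supp.
have [w' w'f [nw' sw']] : exists2 w', w' \in msupp f & w' != w /\ sameA w' w.
  case: (boolP (has (fun x => (x != w) && [forall r, cm x r == cm w r]) (msupp f))).
    case/hasP=> w' w'f /andP[nw' /forallP h]; exists w' => //; split=> // r.
    exact/eqP/h.
  rewrite -all_predC => /allP hall.
  move: (hf (cm w)); rewrite big_mkcond (bigD1_seq w) ?msupp_uniq //=.
  have -> : [forall r, config_mul A (fun k => w k) r == cm w r] by apply/forallP.
  rewrite big1_seq ?addr0.
    by move/eqP; rewrite mcoeff_eq0 wf.
  move=> x /andP[xw xf]; move: (hall x xf) => /=; rewrite xw /=.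
  by case: ifP => // ->.
set f' := f - f@_w *: ('X_[w] - 'X_[w']).
have ef : f = f' + f@_w *: ('X_[w] - 'X_[w']) by rewrite /f' subrK.
rewrite ef; apply: PD; last by apply: Pb => r; rewrite sw'.
apply: ih; last first.
  apply: toricB => //; apply: toricZ; apply/toric_binP => r; by rewrite sw'.
have sub : {subset msupp f' <= rem w (msupp f)}.
  move=> x; rewrite (mem_rem_uniq _ (msupp_uniq f)) inE mcoeff_msupp /f'.
  rewrite mcoeffB mcoeffZ mcoeffB !mcoeffX.
  have [->|xw] := eqVneq x w; first by rewrite (negbTE nw') subr0 mulr1 subrr eqxx.
  rewrite sub0r /=.
  have [->|xw'] := eqVneq x w'; first by rewrite w'f.
  by rewrite mulr0n oppr0 mulr0 subr0 -mcoeff_msupp.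
have := uniq_leq_size (msupp_uniq f') sub; rewrite size_rem //.
by move=> h; apply: leq_trans h _; rewrite -subn1 leq_subLR add1n.
Qed.
End Gen.


Section Kmn.
Variables m n : nat.
Hypothesis hn : (0 < n)%N.

Definition krow (k : 'I_(m * n)) : nat := (k %/ n)%N.
Definition kcol (k : 'I_(m * n)) : nat := (k %% n)%N.

Lemma idx_proof (i : 'I_m) (j : 'I_n) : (i * n + j < m * n)%N.
Proof.
have hi := ltn_ord i; have hj := ltn_ord j.
have : (i.+1 * n <= m * n)%N by rewrite leq_mul2r hi orbT.
rewrite mulSn; lia.
Qed.

Definition idx (i : 'I_m) (j : 'I_n) : 'I_(m * n) := Ordinal (idx_proof i j).

Lemma row_idx i j : krow (idx i j) = i.
Proof. by rewrite /krow /= divnMDl // divn_small ?addn0. Qed.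

Lemma col_idx i j : kcol (idx i j) = j.
Proof. by rewrite /kcol /= modnMDl modn_small. Qed.

Lemma row_lt (k : 'I_(m * n)) : (krow k < m)%N.
Proof. by rewrite /krow ltn_divLR // ltn_ord. Qed.

Lemma col_lt (k : 'I_(m * n)) : (kcol k < n)%N.
Proof. by rewrite /kcol ltn_pmod. Qed.

Lemma idxE (k : 'I_(m * n)) : k = idx (Ordinal (row_lt k)) (Ordinal (col_lt k)).
Proof. by apply: val_inj; rewrite /= /krow /kcol -divn_eq. Qed.

Lemma idx_inj i j i' j' : (idx i j == idx i' j') = (i == i') && (j == j').
Proof.
apply/eqP/andP => [h|[/eqP -> /eqP ->] //].
have r := row_idx i j; have c := col_idx i j.
rewrite h row_idx in r; rewrite h col_idx in c.
by split; apply/eqP/val_inj.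
Qed.

Definition KA := @Kmn_config m n.
Local Notation sameK := (sameA KA).
Local Notation cmK := (cm KA).

Definition rs (u : 'X_{1..m * n}) (i : nat) := (\sum_(k < m * n | krow k == i) u k)%N.
Definition cs (u : 'X_{1..m * n}) (j : nat) := (\sum_(k < m * n | kcol k == j) u k)%N.

Lemma KAE k r : KA k r = ((nat_of_ord r == krow k) + (nat_of_ord r == m + kcol k))%N%:Z.
Proof. by []. Qed.

Lemma Posz_sum (I : Type) (s : seq I) (P : pred I) (F : I -> nat) :
  ((\sum_(i <- s | P i) F i)%N)%:Z = \sum_(i <- s | P i) (F i)%:Z.
Proof. by apply: (big_morph Posz PoszD). Qed.

Lemma cmKE u r : cmK u r = ((\sum_k ((nat_of_ord r == krow k) + (nat_of_ord r == m + kcol k)) * u k)%N)%:Z.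
Proof. by rewrite Posz_sum; apply: eq_bigr => k _; rewrite KAE PoszM. Qed.

Lemma rsE u (i : 'I_(m + n)) : (i < m)%N -> cmK u i = (rs u i)%:Z.
Proof.
move=> im; rewrite cmKE /rs; congr Posz; rewrite [RHS]big_mkcond; apply: eq_bigr => k _.
have -> : (nat_of_ord i == m + kcol k) = false by apply/negbTE; lia.
by rewrite addn0 eq_sym; case: (krow k == i); rewrite ?mul1n ?mul0n.
Qed.

Lemma colr_proof (j : 'I_n) : (m + j < m + n)%N. Proof. by rewrite ltn_add2l. Qed.
Definition colr (j : 'I_n) : 'I_(m + n) := Ordinal (colr_proof j).

Lemma csE u (j : 'I_n) : cmK u (colr j) = (cs u j)%:Z.
Proof.
rewrite cmKE /cs; congr Posz; rewrite [RHS]big_mkcond; apply: eq_bigr => k _.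
have -> : (m + j == krow k) = false by apply/negbTE; have := row_lt k; lia.
by rewrite eqn_add2l add0n eq_sym; case: (kcol k == j); rewrite ?mul1n ?mul0n.
Qed.

Lemma sameK_rs u v : sameK u v -> forall i, rs u i = rs v i.
Proof.
move=> h i; case: (ltnP i m) => im.
  have im' : (i < m + n)%N by lia.
  by have := h (Ordinal im'); rewrite !rsE //; case.
rewrite /rs !big1 // => k /eqP rk; have := row_lt k; lia.
Qed.

Lemma sameK_cs u v : sameK u v -> forall j, cs u j = cs v j.
Proof.
move=> h j; case: (ltnP j n) => jn.
  by have := h (colr (Ordinal jn)); rewrite !(csE _ (Ordinal jn)); case.
rewrite /cs !big1 // => k /eqP rk; have := col_lt k; lia.
Qed.

Lemma rsD u v i : rs (u + v)%MM i = (rs u i + rs v i)%N.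
Proof. by rewrite /rs -big_split; apply: eq_bigr => k _; rewrite mnmDE. Qed.
Lemma csD u v i : cs (u + v)%MM i = (cs u i + cs v i)%N.
Proof. by rewrite /cs -big_split; apply: eq_bigr => k _; rewrite mnmDE. Qed.
Lemma rsMn u t i : rs (u *+ t)%MM i = (rs u i * t)%N.
Proof. by rewrite /rs big_distrl; apply: eq_bigr => k _; rewrite mulmnE. Qed.
Lemma csMn u t i : cs (u *+ t)%MM i = (cs u i * t)%N.
Proof. by rewrite /cs big_distrl; apply: eq_bigr => k _; rewrite mulmnE. Qed.
Lemma rsU a i : rs U_(a)%MM i = (krow a == i).
Proof.
rewrite /rs; case: (boolP (krow a == i)) => ha.
  rewrite (bigD1 a) //= big1 ?addn0 ?mnm1E ?eqxx // => k /andP[_ ka].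
  by rewrite mnm1E eq_sym (negbTE ka).
by rewrite big1 // => k /eqP rk; rewrite mnm1E; case: eqP => // ak; rewrite ak rk eqxx in ha.
Qed.
Lemma csU a i : cs U_(a)%MM i = (kcol a == i).
Proof.
rewrite /cs; case: (boolP (kcol a == i)) => ha.
  rewrite (bigD1 a) //= big1 ?addn0 ?mnm1E ?eqxx // => k /andP[_ ka].
  by rewrite mnm1E eq_sym (negbTE ka).
by rewrite big1 // => k /eqP rk; rewrite mnm1E; case: eqP => // ak; rewrite ak rk eqxx in ha.
Qed.

Lemma minor_same i p j l :
  sameK (U_(idx i j) + U_(idx p l))%MM (U_(idx i l) + U_(idx p j))%MM.
Proof.
move=> r; rewrite !cmD !cmU !KAE !row_idx !col_idx -!PoszD; congr Posz; lia.
Qed.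


Lemma ltn_sum_cond (I : finType) (P : pred I) (a b : I -> nat) j :
  (forall k, P k -> a k <= b k)%N -> P j -> (a j < b j)%N ->
  (\sum_(k | P k) a k < \sum_(k | P k) b k)%N.
Proof.
move=> hle Pj hj; rewrite (bigD1 j) //= [X in (_ < X)%N](bigD1 j) //=.
have := @leq_sum _ _ (fun k => P k && (k != j)) a b (fun k hk => hle k (andP hk).1).
move=> h; have := h (index_enum I); lia.
Qed.

Lemma row_eq_idx (k : 'I_(m * n)) (i : 'I_m) : krow k = i ->
  k = idx i (Ordinal (col_lt k)).
Proof. by move=> h; rewrite {1}(idxE k); congr idx; apply: val_inj. Qed.

Lemma col_eq_idx (k : 'I_(m * n)) (j : 'I_n) : kcol k = j ->
  k = idx (Ordinal (row_lt k)) j.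
Proof. by move=> h; rewrite {1}(idxE k); congr idx; apply: val_inj. Qed.

Lemma Kconn (K : fieldType) (P : {mpoly K[m * n]} -> Prop) :
  P 0 -> (forall f g, P f -> P g -> P (f + g)) ->
  (forall w i p j l, P ('X_[w + (U_(idx i j) + U_(idx p l))] - 'X_[w + (U_(idx i l) + U_(idx p j))])) ->
  forall u v, sameK u v -> P ('X_[u] - 'X_[v]).
Proof.
move=> P0 PD Pm.
suff H : forall N (u v : 'X_{1..m * n}), (\sum_k (u k - v k) < N)%N -> sameK u v -> P ('X_[u] - 'X_[v]).
  by move=> u v; apply: (H _ u v (ltnSn _)).
elim=> // N ih u v hN huv.
case: (boolP [exists k, v k < u k]%N) => [/existsP [k0 hk0] | /existsPn hle]; last first.
  have hk : forall k, (u k <= v k)%N by move=> k; rewrite leqNgt hle.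
  suff -> : u = v by rewrite subrr.
  apply/mnmP => k; apply/eqP; rewrite eqn_leq hk /= leqNgt; apply/negP => hlt.
  have := sameK_rs huv (krow k).
  have : (rs u (krow k) < rs v (krow k))%N.
    exact: (@ltn_sum_cond _ (fun k' => krow k' == krow k) u v k (fun k' _ => hk k') (eqxx _) hlt).
  lia.
set i := Ordinal (row_lt k0); set j := Ordinal (col_lt k0).
have ek0 : k0 = idx i j := idxE k0.
case: (boolP [exists k, (krow k == i) && (u k < v k)]%N) => [/existsP [k1 /andP[/eqP rk1 hk1]] | /existsPn H1]; last first.
  exfalso; have := sameK_rs huv i.
  have h1 : forall k, krow k == i -> (v k <= u k)%N.
    by move=> k rk; move: (H1 k); rewrite rk /= -leqNgt.
  have : (rs v i < rs u i)%N.
    exact: (@ltn_sum_cond _ (fun k' => krow k' == i) v u k0 h1 (eqxx _) hk0).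
  lia.
case: (boolP [exists k, (kcol k == j) && (u k < v k)]%N) => [/existsP [k2 /andP[/eqP ck2 hk2]] | /existsPn H2]; last first.
  exfalso; have := sameK_cs huv j.
  have h1 : forall k, kcol k == j -> (v k <= u k)%N.
    by move=> k rk; move: (H2 k); rewrite rk /= -leqNgt.
  have : (cs v j < cs u j)%N.
    exact: (@ltn_sum_cond _ (fun k' => kcol k' == j) v u k0 h1 (eqxx _) hk0).
  lia.
set l := Ordinal (col_lt k1); set p := Ordinal (row_lt k2).
have ek1 : k1 = idx i l := row_eq_idx rk1.
have ek2 : k2 = idx p j := col_eq_idx ck2.
have lj : l != j.
  apply/negP => /eqP e; have : k1 = k0 by rewrite ek1 ek0 e.
  by move=> e'; rewrite e' in hk1; clear -hk0 hk1; lia.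
have pi : p != i.
  apply/negP => /eqP e; have : k2 = k0 by rewrite ek2 ek0 e.
  by move=> e'; rewrite e' in hk2; clear -hk0 hk2; lia.
set a := idx i l; set b := idx p j; set e1 := idx i j; set e2 := idx p l.
have ab : a != b by rewrite idx_inj negb_and eq_sym pi.
have ae1 : a != e1 by rewrite idx_inj negb_and lj orbT.
have ae2 : a != e2 by rewrite idx_inj negb_and eq_sym pi.
have be1 : b != e1 by rewrite idx_inj negb_and pi.
have be2 : b != e2 by rewrite idx_inj negb_and eq_sym lj orbT.
have va : (u a < v a)%N by rewrite /a -ek1.
have vb : (u b < v b)%N by rewrite /b -ek2.
have ve1 : (v e1 < u e1)%N by rewrite /e1 -ek0.
have hab : (U_(a) + U_(b) <= v)%MM.
  apply/mnm_lepP => k; rewrite mnmDE !mnm1E.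
  have [<-|ka] := eqVneq a k.
    by rewrite eq_sym (negbTE ab); clear -va; lia.
  have [<-|kb] := eqVneq b k; last by [].
  clear -vb; lia.
set c := (v - (U_(a) + U_(b)))%MM.
have ev : v = (c + (U_(a) + U_(b)))%MM by rewrite /c submK.
set v' := (c + (U_(e1) + U_(e2)))%MM.
have -> : 'X_[u] - 'X_[v] = ('X_[u] - 'X_[v']) + ('X_[v'] - 'X_[v]) :> {mpoly K[m * n]}.
  by rewrite addrA subrK.
apply: PD; last by rewrite ev; apply: Pm.
apply: ih; last first.
  apply: (sameA_trans huv); rewrite ev /v'; apply: sameA_add.
  by apply: sameA_sym; apply: minor_same.
have hv' : forall k, v' k = (v k - ((a == k) + (b == k)) + ((e1 == k) + (e2 == k)))%N.
  by move=> k; rewrite /v' /c mnmDE mnmBE !mnmDE !mnm1E.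
suff : (\sum_k (u k - v' k) < \sum_k (u k - v k))%N by clear -hN; lia.
apply: (@ltn_sum_cond _ predT _ _ e1) => // [k _|]; last first.
  by rewrite hv' ?eqxx (negbTE ae1) (negbTE be1); clear -ve1; lia.
rewrite hv'.
have [<-|ka] := eqVneq a k.
  by rewrite ?eqxx [b == a]eq_sym [e1 == a]eq_sym [e2 == a]eq_sym (negbTE ab) (negbTE ae1) (negbTE ae2); clear -va; lia.
have [<-|kb] := eqVneq b k.
  by rewrite [e1 == b]eq_sym [e2 == b]eq_sym (negbTE be1) (negbTE be2); clear -vb; lia.
clear; lia.
Qed.


Lemma Kind (K : fieldType) (P : {mpoly K[m * n]} -> Prop) :
  P 0 -> (forall f g, P f -> P g -> P (f + g)) -> (forall c f, P f -> P (c *: f)) ->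
  (forall w i p j l, P ('X_[w + (U_(idx i j) + U_(idx p l))] - 'X_[w + (U_(idx i l) + U_(idx p j))])) ->
  forall f, toric_ideal KA f -> P f.
Proof.
move=> P0 PD PZ Pm; apply: toric_ind => // c u v h.
by apply: PZ; apply: Kconn.
Qed.

Lemma le_rs (w : 'X_{1..m * n}) k : (w k <= rs w (krow k))%N.
Proof. by rewrite /rs (bigD1 k) //= leq_addr. Qed.
Lemma le_cs (w : 'X_{1..m * n}) k : (w k <= cs w (kcol k))%N.
Proof. by rewrite /cs (bigD1 k) //= leq_addr. Qed.

Lemma Kfib (i p : 'I_m) (j l : 'I_n) : i != p -> j != l -> forall t (w : 'X_{1..m * n}),
  sameK w ((U_(idx i j) + U_(idx p l)) *+ t)%MM ->
  exists q s, (q + s = t)%N /\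
    w = ((U_(idx i j) + U_(idx p l)) *+ q + (U_(idx i l) + U_(idx p j)) *+ s)%MM.
Proof.
move=> ip jl t w h.
have hr := sameK_rs h; have hc := sameK_cs h.
set e1 := idx i j; set e2 := idx p l; set a := idx i l; set b := idx p j.
have RS r : rs ((U_(e1) + U_(e2)) *+ t)%MM r = (((i == r :> nat) + (p == r :> nat)) * t)%N.
  by rewrite rsMn rsD !rsU /e1 /e2 !row_idx.
have CS r : cs ((U_(e1) + U_(e2)) *+ t)%MM r = (((j == r :> nat) + (l == r :> nat)) * t)%N.
  by rewrite csMn csD !csU /e1 /e2 !col_idx.
have pi : p != i by rewrite eq_sym.
have lj : l != j by rewrite eq_sym.
have zero : forall k, k != e1 -> k != e2 -> k != a -> k != b -> w k = 0%N.
  move=> k n1 n2 n3 n4.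
  have ek := idxE k; set ri := Ordinal (row_lt k) in ek; set ci := Ordinal (col_lt k) in ek.
  case: (boolP ((ri == i) || (ri == p))) => hri; last first.
    have := le_rs w k; rewrite hr RS.
    have -> : (i == krow k :> nat) = false.
      by apply/negbTE; move: hri; rewrite negb_or => /andP[h1 _]; rewrite eq_sym.
    have -> : (p == krow k :> nat) = false.
      by apply/negbTE; move: hri; rewrite negb_or => /andP[_ h1]; rewrite eq_sym.
    clear -hn; lia.
  case: (boolP ((ci == j) || (ci == l))) => hci; last first.
    have := le_cs w k; rewrite hc CS.
    have -> : (j == kcol k :> nat) = false.
      by apply/negbTE; move: hci; rewrite negb_or => /andP[h1 _]; rewrite eq_sym.
    have -> : (l == kcol k :> nat) = false.
      by apply/negbTE; move: hci; rewrite negb_or => /andP[_ h1]; rewrite eq_sym.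
    clear -hn; lia.
  exfalso.
  by case/orP: hri => /eqP e; case/orP: hci => /eqP e'; rewrite ek e e' ?eqxx in n1 n2 n3 n4.
have d12 : e1 != e2 by rewrite idx_inj negb_and ip.
have d1a : e1 != a by rewrite idx_inj negb_and jl orbT.
have d1b : e1 != b by rewrite idx_inj negb_and ip.
have d2a : e2 != a by rewrite idx_inj negb_and pi.
have d2b : e2 != b by rewrite idx_inj negb_and lj orbT.
have dab : a != b by rewrite idx_inj negb_and ip.
have ew : w = (U_(e1) *+ w e1 + U_(e2) *+ w e2 + U_(a) *+ w a + U_(b) *+ w b)%MM.
  apply/mnmP => k; rewrite !mnmDE !mulmnE !mnm1E.
  have d21 : e2 != e1 by rewrite eq_sym.
  have da1 : a != e1 by rewrite eq_sym.
  have db1 : b != e1 by rewrite eq_sym.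
  have da2 : a != e2 by rewrite eq_sym.
  have db2 : b != e2 by rewrite eq_sym.
  have dba : b != a by rewrite eq_sym.
  have [<-|n1] := eqVneq e1 k.
    by rewrite ?(negbTE d21) ?(negbTE da1) ?(negbTE db1); clear -hn; lia.
  have [<-|n2] := eqVneq e2 k.
    by rewrite ?(negbTE da2) ?(negbTE db2); clear -hn; lia.
  have [<-|n3] := eqVneq a k.
    by rewrite ?(negbTE dba); clear -hn; lia.
  have [<-|n4] := eqVneq b k; first by clear -hn; lia.
  by rewrite zero 1?eq_sym.
have pi' : (p == i :> nat) = false := negbTE pi.
have ip' : (i == p :> nat) = false := negbTE ip.
have lj' : (l == j :> nat) = false := negbTE lj.
have jl' : (j == l :> nat) = false := negbTE jl.
have e_ri : (w e1 + w a = t)%N.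
  move: (hr i); rewrite RS eqxx pi' {1}ew !rsD !rsMn !rsU /e1 /e2 /a /b !row_idx.
  rewrite eqxx pi'; clear -hn; lia.
have e_rp : (w e2 + w b = t)%N.
  move: (hr p); rewrite RS eqxx ip' {1}ew !rsD !rsMn !rsU /e1 /e2 /a /b !row_idx.
  rewrite eqxx ip'; clear -hn; lia.
have e_cj : (w e1 + w b = t)%N.
  move: (hc j); rewrite CS eqxx lj' {1}ew !csD !csMn !csU /e1 /e2 /a /b !col_idx.
  rewrite eqxx lj'; clear -hn; lia.
have e_cl : (w e2 + w a = t)%N.
  move: (hc l); rewrite CS eqxx jl' {1}ew !csD !csMn !csU /e1 /e2 /a /b !col_idx.
  rewrite eqxx jl'; clear -hn; lia.
exists (w e1), (w a); split; first by [].
rewrite {1}ew; apply/mnmP => k; rewrite !mnmDE !mulmnE !mnmDE !mnm1E.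
have -> : w e2 = w e1 by clear -e_ri e_rp e_cj e_cl; lia.
have -> : w b = w a by clear -e_ri e_rp e_cj e_cl; lia.
rewrite !mulnDl; clear -hn; lia.
Qed.

End Kmn.


Section LB.
Variables m n : nat.
Hypothesis hn : (0 < n)%N.
Variable K : fieldType.
Local Notation KA := (@KA m n).
Local Notation idx := (@idx m n hn).

Lemma coef_zero d (A0 : config (m * n) d) (g : {mpoly K[m * n]}) :
  toric_ideal A0 g -> (forall f : {mpoly K[m * n]}, toric_ideal A0 f -> toric_ideal KA f) ->
  forall i p j l, i != p -> j != l ->
  ~ sameA A0 (U_(idx i j) + U_(idx p l))%MM (U_(idx i l) + U_(idx p j))%MM ->
  forall t, g@_((U_(idx i j) + U_(idx p l)) *+ t)%MM = 0.
Proof.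
move=> hg hsub i p j l ip jl hns t.
set u := (U_(idx i j) + U_(idx p l))%MM; set v := (U_(idx i l) + U_(idx p j))%MM.
set w := (u *+ t)%MM.
have key : forall x, sameA A0 x w -> x = w.
  move=> x hx.
  have hK : sameA KA x w.
    apply/(@toric_binP K); apply: hsub; exact/toric_binP.
  have [q [s [hqs ex]]] := Kfib ip jl hK.
  case: s hqs ex => [|s] hqs ex.
    by rewrite ex mulm0n addm0 /w -hqs addn0.
  exfalso; apply: hns => r; have := hx r.
  rewrite ex /w -hqs !cmD !cmMn mulrnDr => /addrI h.
  apply: (@mulIf _ (s.+1)%:R); first by rewrite Num.Theory.pnatr_eq0.
  by rewrite !mulr_natr -!cmD; symmetry; exact: h.
have [wg|wg] := boolP (w \in msupp g); last exact: memN_msupp_eq0.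
move: (hg (cm A0 w)); rewrite big_mkcond (bigD1_seq w) ?msupp_uniq //=.
have -> : [forall r, config_mul A0 (fun k => w k) r == cm A0 w r] by apply/forallP.
rewrite big1_seq ?addr0 // => x /andP[xw _].
case: ifP => // /forallP hx.
have := key x (fun r => eqP (hx r)); move/eqP; by rewrite (negbTE xw).
Qed.


Lemma minor_neq (i p : 'I_m) (j l : 'I_n) : i != p -> j != l ->
  (U_(idx i j) + U_(idx p l))%MM != (U_(idx i l) + U_(idx p j))%MM.
Proof.
move=> ip jl; apply/negP => /eqP /mnmP /(_ (idx i j)).
rewrite !mnmDE !mnm1E eqxx !idx_inj !eqxx [p == i]eq_sym [l == j]eq_sym (negbTE ip) (negbTE jl).
by [].
Qed.

Lemma minor_in_some s (J : 'I_s -> {mpoly K[m * n]} -> Prop) :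
  (forall c, is_toric (J c)) -> (forall c f, J c f -> toric_ideal KA f) ->
  forall i p j l, i != p -> j != l -> forall k,
  ideal_sum J (('X_[(U_(idx i j) + U_(idx p l))%MM] - 'X_[(U_(idx i l) + U_(idx p j))%MM]) ^+ k) ->
  exists c, J c ('X_[(U_(idx i j) + U_(idx p l))%MM] - 'X_[(U_(idx i l) + U_(idx p j))%MM]).
Proof.
move=> hJ hsub i p j l ip jl k [g [hg eg]].
set u := (U_(idx i j) + U_(idx p l))%MM; set v := (U_(idx i l) + U_(idx p j))%MM.
set M : {mpoly K[m * n]} := 'X_[u] - 'X_[v].
apply: NNPP => hno.
have uv : u != v by apply: minor_neq.
have M0 : M != 0.
  apply/eqP => h; have := congr1 (mcoeff u) h.
  rewrite mcoeffB !mcoeffX eqxx mcoeff0 [v == u]eq_sym (negbTE uv) subr0 => /eqP.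
  by rewrite oner_eq0.
have lr : GRing.lreg (mleadc M) by apply/mulfI; rewrite mleadc_eq0.
have eL := mleadX_proper k lr.
have nz : (M ^+ k)@_(mlead M *+ k)%MM != 0 by rewrite -eL mleadc_eq0 expf_neq0.
have hm : (mlead M == u) || (mlead M == v).
  have := mlead_supp M0 => /msuppB_le; rewrite mem_cat !msuppX !inE.
  by [].
move: nz; rewrite eg raddf_sum big1 ?eqxx // => c _.
case: (hJ c) => d [A0 [_ hsame]].
have hg' : toric_ideal A0 (g c) by apply/hsame/hg.
have hsub' : forall f : {mpoly K[m * n]}, toric_ideal A0 f -> toric_ideal KA f.
  by move=> f /hsame /hsub.
have hns : ~ sameA A0 u v.
  by move=> h; apply: hno; exists c; apply/hsame/(toric_binP K).
case/orP: hm => /eqP ->.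
  exact: (coef_zero hg' hsub' ip jl hns).
have jl' : l != j by rewrite eq_sym.
apply: (coef_zero hg' hsub' ip jl') => h; apply: hns.
exact: sameA_sym.
Qed.

Lemma eqv_union (T : Type) (R1 R2 : T -> T -> Prop) :
  (forall x y, R1 x y -> R1 y x) -> (forall x y z, R1 x y -> R1 y z -> R1 x z) ->
  (forall x y, R2 x y -> R2 y x) -> (forall x y z, R2 x y -> R2 y z -> R2 x z) ->
  (forall x y, R1 x y \/ R2 x y) -> (forall x y, R1 x y) \/ (forall x y, R2 x y).
Proof.
move=> s1 t1 s2 t2 h.
case: (classic (forall x y, R1 x y)) => [|/not_all_ex_not [a /not_all_ex_not [b nab]]]; first by left.
right.
have r2ab : R2 a b by case: (h a b).
have toa : forall x, R2 x a.
  move=> x; case: (classic (R1 x a)) => [xa|nxa].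
    case: (h x b) => [xb|xb]; last by apply: t2 xb (s2 _ _ r2ab).
    by exfalso; apply: nab; apply: t1 (s1 _ _ xa) xb.
  by case: (h x a).
by move=> x y; apply: t2 (toa x) (s2 _ _ (toa y)).
Qed.

Definition minorP (i p : 'I_m) (j l : 'I_n) : {mpoly K[m * n]} :=
  'X_[(U_(idx i j) + U_(idx p l))%MM] - 'X_[(U_(idx i l) + U_(idx p j))%MM].

Lemma toric_minorP d (A0 : config (m * n) d) i p j l :
  toric_ideal A0 (minorP i p j l) <->
  forall r, A0 (idx i j) r + A0 (idx p l) r = A0 (idx i l) r + A0 (idx p j) r.
Proof.
rewrite /minorP; split.
  by move/(toric_binP K) => h r; move: (h r); rewrite !cmD !cmU.
by move=> h; apply/(toric_binP K) => r; rewrite !cmD !cmU.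
Qed.

Section Col.
Variable J : {mpoly K[m * n]} -> Prop.
Hypothesis hJ : is_toric J.

Lemma Z_sym_col i p j l : J (minorP i p j l) -> J (minorP i p l j).
Proof.
case: hJ => d [A0 [_ hs]]; move/hs/toric_minorP => h; apply/hs/toric_minorP => r.
move: (h r); clear; lia.
Qed.
Lemma Z_trans_col i p j l q : J (minorP i p j l) -> J (minorP i p l q) -> J (minorP i p j q).
Proof.
case: hJ => d [A0 [_ hs]]; move/hs/toric_minorP => h1 /hs/toric_minorP h2.
apply/hs/toric_minorP => r; move: (h1 r) (h2 r); clear; lia.
Qed.
Lemma Z_sym_row i p j l : J (minorP i p j l) -> J (minorP p i j l).
Proof.
case: hJ => d [A0 [_ hs]]; move/hs/toric_minorP => h; apply/hs/toric_minorP => r.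
move: (h r); clear; lia.
Qed.
Lemma Z_trans_row i p q j l : J (minorP i p j l) -> J (minorP p q j l) -> J (minorP i q j l).
Proof.
case: hJ => d [A0 [_ hs]]; move/hs/toric_minorP => h1 /hs/toric_minorP h2.
apply/hs/toric_minorP => r; move: (h1 r) (h2 r); clear; lia.
Qed.
Lemma Z_diag_row i j l : J (minorP i i j l).
Proof.
case: hJ => d [A0 [_ hs]]; apply/hs/toric_minorP => r; lia.
Qed.
Lemma Z_diag_col i p j : J (minorP i p j j).
Proof.
case: hJ => d [A0 [_ hs]]; apply/hs/toric_minorP => r; lia.
Qed.

Lemma Z_all_sup : (forall i p j l, J (minorP i p j l)) ->
  forall f, toric_ideal KA f -> J f.
Proof.
move=> hall; case: hJ => d [A0 [_ hs]].
apply: (@Kind m n hn K J).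
- by apply/hs/toric0.
- by move=> f g /hs hf /hs hg; apply/hs/toricD.
- by move=> c f /hs hf; apply/hs/toricZ.
move=> w i p j l; apply/hs/(toric_binP K); apply: sameA_add.
by move: (hall i p j l) => /hs/(toric_binP K).
Qed.
End Col.

Lemma lower_bound (hm2 : (1 < m)%N) (hn2 : (1 < n)%N) s
  (J : 'I_s -> {mpoly K[m * n]} -> Prop) :
  (forall c, is_toric (J c)) -> (forall c, ~ same_set (J c) (toric_ideal KA)) ->
  (forall c f, J c f -> toric_ideal KA f) ->
  (forall f, toric_ideal KA f -> exists k, ideal_sum J (f ^+ k)) -> (3 <= s)%N.
Proof.
move=> hJ hne hsub hI.
have hmin : forall i p j l, i != p -> j != l -> exists c, J c (minorP i p j l).
  move=> i p j l ip jl.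
  have : toric_ideal KA (minorP i p j l) by apply/(toric_binP K); exact: minor_same.
  by case/hI => k hk; exact: (minor_in_some hJ hsub ip jl hk).
have h0m : (0 < m)%N by apply: ltn_trans hm2.
have h0n : (0 < n)%N by apply: ltn_trans hn2.
set i0 : 'I_m := Ordinal h0m; set i1 : 'I_m := Ordinal hm2.
set j0 : 'I_n := Ordinal h0n; set j1 : 'I_n := Ordinal hn2.
case: s J hJ hne hsub hI hmin => [|s] J hJ hne hsub hI hmin.
  by have [[c hc] _] := hmin i0 i1 j0 j1 isT isT.
rewrite ltnNge; apply/negP => hs.
set c0 : 'I_s.+1 := ord0; set c1 : 'I_s.+1 := ord_max.
have hc : forall c : 'I_s.+1, c = c0 \/ c = c1.
  move=> c; case: (eqVneq (val c) 0) => h; [left|right]; apply: val_inj => /=.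
    by [].
  rewrite /c1 /=; have h' : (nat_of_ord c != 0)%N := h; have := ltn_ord c; clear -h' hs; lia.
have hZ : forall i p j l, J c0 (minorP i p j l) \/ J c1 (minorP i p j l).
  move=> i p j l; case: (eqVneq i p) => [->|ip]; first by left; apply: Z_diag_row.
  case: (eqVneq j l) => [->|jl]; first by left; apply: Z_diag_col.
  by have [c hc'] := hmin i p j l ip jl; case: (hc c) => ec; rewrite ec in hc'; [left|right].
have step1 : forall i p, (forall j l, J c0 (minorP i p j l)) \/ (forall j l, J c1 (minorP i p j l)).
  move=> i p; apply: eqv_union.
  - by move=> x y; apply: (Z_sym_col (hJ c0)).
  - by move=> x y z; apply: (Z_trans_col (hJ c0)).
  - by move=> x y; apply: (Z_sym_col (hJ c1)).
  - by move=> x y z; apply: (Z_trans_col (hJ c1)).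
  - by move=> x y; apply: hZ.
have step2 : (forall i p j l, J c0 (minorP i p j l)) \/ (forall i p j l, J c1 (minorP i p j l)).
  apply: (@eqv_union _ (fun i p => forall j l, J c0 (minorP i p j l))
                       (fun i p => forall j l, J c1 (minorP i p j l))).
  - by move=> x y h j l; apply: (Z_sym_row (hJ c0)); apply: h.
  - by move=> x y z h1 h2 j l; apply: (Z_trans_row (hJ c0) (h1 j l) (h2 j l)).
  - by move=> x y h j l; apply: (Z_sym_row (hJ c1)); apply: h.
  - by move=> x y z h1 h2 j l; apply: (Z_trans_row (hJ c1) (h1 j l) (h2 j l)).
  - exact: step1.
case: step2 => h.
  by apply: (hne c0) => f; split; [exact: hsub | exact: (Z_all_sup (hJ _) h)].
by apply: (hne c1) => f; split; [exact: hsub | exact: (Z_all_sup (hJ _) h)].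
Qed.

End LB.


Section Rad.
Variables m n : nat.
Hypothesis hn : (0 < n)%N.
Variable K : fieldType.
Local Notation KA := (@KA m n).

Lemma rowv_proof (k : 'I_(m * n)) : (krow k < m + n)%N.
Proof. have := row_lt hn k; lia. Qed.
Lemma colv_proof (k : 'I_(m * n)) : (m + kcol k < m + n)%N.
Proof. have := col_lt hn k; lia. Qed.
Definition mu (k : 'I_(m * n)) : 'X_{1..m + n} :=
  (U_(Ordinal (rowv_proof k)) + U_(Ordinal (colv_proof k)))%MM.
Definition Phi (w : 'X_{1..m * n}) : 'X_{1..m + n} := (\sum_(k < m * n) mu k *+ w k)%MM.
Definition phi (f : {mpoly K[m * n]}) : {mpoly K[m + n]} :=
  mmap (@mpolyC (m + n) K) (fun k => 'X_[mu k]) f.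

Lemma phiXn f k : phi (f ^+ k) = phi f ^+ k.
Proof. by rewrite /phi rmorphXn. Qed.

Lemma phiE f : phi f = \sum_(w <- msupp f) f@_w *: 'X_[Phi w].
Proof.
rewrite /phi /mmap; apply: eq_bigr => w _.
by rewrite /mmap1 mprodXnE mul_mpolyC.
Qed.

Lemma phi_coef f b : (phi f)@_b = \sum_(w <- msupp f | Phi w == b) f@_w.
Proof.
rewrite phiE raddf_sum [RHS]big_mkcond /=; apply: eq_bigr => w _.
by rewrite mcoeffZ mcoeffX; case: (Phi w == b); rewrite ?mulr1 ?mulr0.
Qed.

Lemma Phi_cm w r : cm KA w r = ((Phi w) r)%:Z.
Proof.
rewrite cmKE /Phi mnm_sumE; congr Posz; apply: eq_bigr => k _.
by rewrite mulmnE mnmDE !mnm1E (eq_sym (Ordinal (rowv_proof k))) (eq_sym (Ordinal (colv_proof k))) mulnC.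
Qed.

Lemma toric_phi f : toric_ideal KA f <-> phi f = 0.
Proof.
split.
  move=> hf; apply/mpolyP => b; rewrite phi_coef mcoeff0.
  rewrite -[RHS](hf (fun r => (b r)%:Z)); apply: eq_bigl => w.
  apply/eqP/forallP => [<- r|h]; first by rewrite -/(cm KA w r) Phi_cm.
  apply/mnmP => r; move: (h r); rewrite -/(cm KA w r) Phi_cm.
  by move/eqP; case.
move=> h0 b; case: (boolP [forall r, 0 <= b r]) => [/forallP hb|].
  pose b' : 'X_{1..m + n} := [multinom `|b r|%N | r < m + n].
  have := congr1 (mcoeff b') h0; rewrite phi_coef mcoeff0 => e0; rewrite -[RHS]e0.
  apply: eq_bigl => w; apply/forallP/eqP => [h|e r].
    apply/mnmP => r; rewrite mnmE; move: (h r); rewrite -/(cm KA w r) Phi_cm.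
    move/eqP => e; apply/eqP; rewrite -eqz_nat e gez0_abs //; exact: hb.
  by rewrite -/(cm KA w r) Phi_cm e mnmE gez0_abs //; exact: hb.
move/forallPn => [r hr].
rewrite big1 // => w /forallP /(_ r) /eqP; rewrite -/(cm KA w r) Phi_cm => e.
by move: hr; rewrite -e.
Qed.

Lemma Krad (f : {mpoly K[m * n]}) k : toric_ideal KA (f ^+ k) -> toric_ideal KA f.
Proof.
move/toric_phi; rewrite phiXn => /eqP; rewrite expf_eq0 => /andP[_ /eqP h].
exact/toric_phi.
Qed.

End Rad.


Definition pick3 (a b : nat) : 'I_3 :=
  if (a != 0%N) && (b != 0%N) then @Ordinal 3 0 isT
  else if (a != 1%N) && (b != 1%N) then @Ordinal 3 1 isT else @Ordinal 3 2 isT.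

Lemma pick3P a b : (a != pick3 a b) && (b != pick3 a b).
Proof. by rewrite /pick3; case: ifP => //=; case: ifP => //=; lia. Qed.

Section UB.
Variables m n : nat.
Hypothesis hm2 : (1 < m)%N.
Hypothesis hn2 : (1 < n)%N.
Hypothesis hbig : (2 < m)%N || (2 < n)%N.
Variable K : fieldType.
Let hn : (0 < n)%N := ltn_trans (ltnSn 0) hn2.
Local Notation KA := (@KA m n).
Local Notation idx := (@idx m n hn).
Local Notation krow := (@krow m n).
Local Notation kcol := (@kcol m n).

Definition big := (2 < n)%N.

Definition wt (c : 'I_3) (k : 'I_(m * n)) : nat :=
  if big then ((krow k == 0%N) && (kcol k == c)) else ((kcol k == 0%N) && (krow k == c)).

Definition Ac (c : 'I_3) : config (m * n) (m + n).+1 :=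
  fun k r => ((nat_of_ord r == krow k) + (nat_of_ord r == m + kcol k) + (nat_of_ord r == m + n) * wt c k)%N%:Z.

Lemma Ac_K c k (r : 'I_(m + n)) : Ac c k (widen_ord (leqnSn _) r) = KA k r.
Proof.
rewrite /Ac KAE /=; have -> : (nat_of_ord r == m + n) = false by apply/negbTE; have := ltn_ord r; lia.
by rewrite mul0n addn0.
Qed.

Lemma cm_Ac_K c u (r : 'I_(m + n)) : cm (Ac c) u (widen_ord (leqnSn _) r) = cm KA u r.
Proof. by apply: eq_bigr => k _; rewrite Ac_K. Qed.

Lemma sameAc_K c u v : sameA (Ac c) u v -> sameA KA u v.
Proof. by move=> h r; rewrite -!(cm_Ac_K c) h. Qed.

Lemma Ac_pointed c : pointed_config (Ac c).
Proof.
move=> u hu k.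
pose u' : 'X_{1..m * n} := [multinom u k | k < m * n].
have h : sameA KA u' 0%MM.
  apply: (@sameAc_K c) => r; rewrite (_ : cm (Ac c) 0%MM r = 0).
    by rewrite -(hu r); apply: eq_bigr => k' _; rewrite mnmE.
  by rewrite /cm /config_mul big1 // => k' _; rewrite mnm0E mulr0.
have := le_rs u' k; rewrite (sameK_rs hn h) /rs big1 => [|k' _]; last by rewrite mnm0E.
by rewrite mnmE leqn0 => /eqP.
Qed.

Lemma toric_Ac_sub c (f : {mpoly K[m * n]}) : toric_ideal (Ac c) f -> toric_ideal KA f.
Proof.
apply: toric_ind.
- exact: toric0.
- by move=> ? ?; apply: toricD.
move=> a u v h; apply: toricZ; apply/(toric_binP K); exact: sameAc_K h.
Qed.

Lemma cover i p j l : exists c, sameA (Ac c) (U_(idx i j) + U_(idx p l))%MM (U_(idx i l) + U_(idx p j))%MM.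
Proof.
pose c := if big then pick3 j l else pick3 i p.
have hw : forall x y, wt c (idx x y) = 0%N -> True by [].
have w0 : (wt c (idx i j) = 0 /\ wt c (idx p l) = 0 /\ wt c (idx i l) = 0 /\ wt c (idx p j) = 0)%N.
  rewrite /wt /c; case: big.
    have := pick3P j l; set z := pick3 j l => /andP[hj hl].
    by rewrite !col_idx (negbTE hj) (negbTE hl) !andbF.
  have := pick3P i p; set z := pick3 i p => /andP[hi hp].
  by rewrite !row_idx (negbTE hi) (negbTE hp) !andbF.
exists c => r; rewrite !cmD !cmU /Ac !row_idx !col_idx.
case: w0 => -> [-> [-> ->]]; rewrite -!PoszD; congr Posz; lia.
Qed.

Lemma Ac_maxE c k : Ac c k ord_max = (wt c k)%:Z.
Proof.
rewrite /Ac /=.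
have -> : (m + n == krow k) = false by apply/negbTE; have := row_lt hn k; lia.
have -> : (m + n == m + kcol k) = false by apply/negbTE; have := col_lt hn k; lia.
by rewrite eqxx mul1n.
Qed.

Lemma Ac_proper c : exists i p j l,
  ~ sameA (Ac c) (U_(idx i j) + U_(idx p l))%MM (U_(idx i l) + U_(idx p j))%MM.
Proof.
have h0m : (0 < m)%N by apply: ltn_trans hm2.
have h0n : (0 < n)%N by apply: ltn_trans hn2.
set c' : nat := if nat_of_ord c == 0%N then 1%N else 0%N.
have cc' : (c' != c)%N by rewrite /c'; case: ifP => /eqP; lia.
have c'2 : (c' < 2)%N by rewrite /c'; case: ifP.
have c3 := ltn_ord c.
case hb: big.
  have cn : (c < n)%N by move: hb; rewrite /big; lia.
  have c'n : (c' < n)%N by lia.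
  exists (Ordinal h0m), (Ordinal hm2), (Ordinal cn), (Ordinal c'n) => h.
  move: (h ord_max); rewrite !cmD !cmU !Ac_maxE /wt hb !row_idx !col_idx /=.
by rewrite eqxx (negbTE cc').
have cm' : (c < m)%N by move: hb hbig; rewrite /big; lia.
have c'm : (c' < m)%N by lia.
exists (Ordinal cm'), (Ordinal c'm), (Ordinal h0n), (Ordinal hn2) => h.
move: (h ord_max); rewrite !cmD !cmU !Ac_maxE /wt hb !row_idx !col_idx /=.
by rewrite eqxx (negbTE cc').
Qed.

Definition JJ (c : 'I_3) : {mpoly K[m * n]} -> Prop := toric_ideal (Ac c).

Lemma ideal_sum_single s (J : 'I_s -> {mpoly K[m * n]} -> Prop) c f :
  (forall c', J c' 0) -> J c f -> ideal_sum J f.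
Proof.
move=> h0 hf; exists (fun c' => if c' == c then f else 0); split.
  by move=> c'; case: eqP => [->|].
rewrite (bigD1 c) //= eqxx big1 ?addr0 // => c' /negbTE ->; by [].
Qed.

Lemma JJ_sum (f : {mpoly K[m * n]}) : toric_ideal KA f <-> ideal_sum JJ f.
Proof.
split.
  apply: (@Kind m n hn K).
  - by exists (fun _ => 0); split; [move=> c; apply: toric0 | rewrite big1].
  - move=> f1 f2 [g1 [h1 e1]] [g2 [h2 e2]]; exists (fun c => g1 c + g2 c); split.
      by move=> c; apply: toricD; [apply: h1 | apply: h2].
    by rewrite big_split /= e1 e2.
  - move=> a f1 [g1 [h1 e1]]; exists (fun c => a *: g1 c); split.
      by move=> c; apply: toricZ; apply: h1.
    by rewrite e1 scaler_sumr.
  move=> w i p j l; have [c hc] := cover i p j l.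
  apply: (@ideal_sum_single _ _ c); first by move=> c'; apply: toric0.
  by apply/(toric_binP K); apply: sameA_add.
move=> [g [hg ->]]; apply: (big_ind (toric_ideal KA)); [exact: toric0 | by move=> x y; apply: toricD | move=> c _; apply: (@toric_Ac_sub c); exact: hg].

Qed.

End UB.



Lemma theorem3p3_aux (K : fieldType) (m n : nat) :
  (2 <= m)%N -> (2 <= n)%N -> (m, n) <> (2%N, 2%N) ->
  Split_eq (@toric_ideal_Kmn K m n) 3 /\ Split_rad_eq (@toric_ideal_Kmn K m n) 3.
Proof.
move=> hm2 hn2 hmn.
have hn : (0 < n)%N by apply: ltn_trans hn2.
have hbig : (2 < m)%N || (2 < n)%N.
  case: (boolP ((2 < m) || (2 < n))%N) => // hh.
  exfalso; apply: hmn; have e1 : m = 2%N by lia.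
  have e2 : n = 2%N by lia.
  by rewrite e1 e2.
have toricJ : forall c, is_toric (@JJ m n K c).
  move=> c; exists (m + n).+1, (Ac c); split; first exact: (Ac_pointed hm2 hn2 hbig).
  by [].
have properJ : forall c, ~ same_set (@JJ m n K c) (@toric_ideal_Kmn K m n).
  move=> c hs; have [i [p [j [l hns]]]] := Ac_proper hm2 hn2 hbig c.
  apply: hns; apply/(toric_binP K); apply/hs.
  by apply/(toric_binP K); apply: (minor_same hn).
have zeroJ : forall s (J : 'I_s -> {mpoly K[m * n]} -> Prop), (forall c, is_toric (J c)) ->
    forall c, J c 0.
  by move=> s J hJ c; case: (hJ c) => d [A [_ hsa]]; apply/hsa; apply: toric0.
split; split.
- exists (@JJ m n K); split; first exact: toricJ.
  split; first exact: properJ.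
  by move=> f; apply: (JJ_sum hm2 hn2 hbig).
- move=> s [J [hJ [hne hs]]].
  apply: (lower_bound hn hm2 hn2 hJ hne).
  + by move=> c f hf; apply/hs; apply: (ideal_sum_single (zeroJ _ _ hJ) hf).
  + by move=> f /hs hf; exists 1%N; rewrite expr1.
- exists (@JJ m n K); split; first exact: toricJ.
  split; first exact: properJ.
  move=> f; split.
    by move=> hf; exists 1%N; rewrite expr1; apply/(JJ_sum hm2 hn2 hbig).
  by move=> [k /(JJ_sum hm2 hn2 hbig) hk]; apply: (Krad hn hk).
- move=> s [J [hJ [hne hs]]].
  apply: (lower_bound hn hm2 hn2 hJ hne).
  + move=> c f hf; apply/hs; exists 1%N; rewrite expr1.
    exact: (ideal_sum_single (zeroJ _ _ hJ) hf).
  + by move=> f /hs.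
Qed.

Close Scope ring_scope.
Unset Implicit Arguments.

Theorem theorem3p3 (K : fieldType) (m n : nat) :
  (2 <= m)%N -> (2 <= n)%N -> (m, n) <> (2%N, 2%N) ->
  Split_eq (@toric_ideal_Kmn K m n) 3 /\ Split_rad_eq (@toric_ideal_Kmn K m n) 3.
Proof. exact: theorem3p3_aux. Qed.
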